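(* For $n\ge2$, there is no finite simple graph $G$ with independence number $n$ whose reduced independence polynomial $P=P_G$ satisfies $\frac{5}{2}P(z)+1=T_n\!\left(\frac{5}{2}z+1\right)$ for all $z$.
   Context: For a finite simple graph $G$, the independence polynomial is $I_G(z)=\sum_{i=0}^{\alpha} a_i z^i$, where $a_i$ is the number of sets of $i$ pairwise non-adjacent vertices and the independence number $\alpha$ is the largest such $i$; the reduced independence polynomial is $P_G=I_G-1$. $T_n$ is the Chebyshev polynomial of the first kind of degree $n$: $T_0=1$, $T_1(z)=z$, $T_n(z)=2zT_{n-1}(z)-T_{n-2}(z)$. *)

(* Defs.v *)
From HB Require Import structures.
From mathcomp Require Import all_boot all_order all_algebra.
Set Implicit Arguments. Unset Strict Implicit. Unset Printing Implicit Defensive.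
Import Order.TTheory GRing.Theory Num.Theory.
Local Open Scope ring_scope.

Definition simple_graph (T : finType) (e : rel T) : Prop :=
  symmetric e /\ irreflexive e.

Definition independent (T : finType) (e : rel T) (S : {set T}) : bool :=
  [forall x in S, forall y in S, ~~ e x y].

Definition indep_count (T : finType) (e : rel T) (i : nat) : nat :=
  #|[set S : {set T} | independent e S && (#|S| == i)]|.

Definition indep_number (T : finType) (e : rel T) : nat :=
  \max_(S : {set T} | independent e S) #|S|.

Definition indep_poly (T : finType) (e : rel T) : {poly rat} :=
  \sum_(i < (indep_number e).+1) (indep_count e i)%:R *: 'X^i.

Definition red_indep_poly (T : finType) (e : rel T) : {poly rat} :=
  indep_poly e - 1.

Fixpoint cheb_pair (n : nat) : {poly rat} * {poly rat} :=
  match n with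
  | 0%N => (1, 'X)
  | m.+1 => let p := cheb_pair m in (p.2, 2%:R *: 'X * p.2 - p.1)
  end.

Definition chebT (n : nat) : {poly rat} := (cheb_pair n).1.

(* Main.v *)
Require Import Defs.
From HB Require Import structures.
From mathcomp Require Import all_boot all_order all_algebra.
From mathcomp Require Import ring lra.
Import Order.TTheory GRing.Theory Num.Theory.
Set Implicit Arguments. Unset Strict Implicit.

Definition depset (T : finType) (e : rel T) (k : nat) : {set {set T}} :=
  [set S : {set T} | ~~ independent e S && (#|S| == k)].

Lemma count1 (T : finType) (e : rel T) : irreflexive e -> indep_count e 1 = #|T|.
Proof.
move=> irr; rewrite /indep_count.
have -> : [set S : {set T} | independent e S && (#|S| == 1)] = (@set1 T) @: [set: T].
  apply/setP => S; rewrite !inE; apply/andP/imsetP.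
  - by move=> [_ /cards1P [x ->]]; exists x; rewrite ?inE.
  - move=> [x _ ->]; split; last by rewrite cards1.
    apply/forallP => y; apply/implyP; rewrite inE => /eqP ->.
    apply/forallP => z; apply/implyP; rewrite inE => /eqP ->.
    by rewrite irr.
by rewrite card_imset ?cardsT //; apply: set1_inj.
Qed.

Lemma split_count (T : finType) (e : rel T) k :
  (indep_count e k + #|depset e k| = 'C(#|T|, k))%N.
Proof.
rewrite -card_draws -(cardsID [set S : {set T} | independent e S]).
rewrite /indep_count /depset; congr (_ + _)%N; apply: eq_card => S; rewrite !inE.
- by rewrite andbC.
- by rewrite andbC.
Qed.

Lemma card_bigcup_leq (I T : finType) (P : pred I) (F : I -> {set T}) :
  (#|\bigcup_(i | P i) F i| <= \sum_(i | P i) #|F i|)%N.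
Proof.
apply: (big_ind2 (fun (A : {set T}) (m : nat) => #|A| <= m)%N).
- by rewrite cards0.
- move=> A a B b hA hB; apply: leq_trans (leq_card_setU A B) _.
  exact: leq_add.
- by [].
Qed.

Lemma dep_bound (T : finType) (e : rel T) : irreflexive e ->
  (#|depset e 3| <= #|depset e 2| * (#|T| - 2))%N.
Proof.
move=> irr.
have sub : depset e 3 \subset
   \bigcup_(p in depset e 2) [set z |: p | z in ~: p].
  apply/subsetP => S; rewrite inE => /andP [/forallPn [x]].
  rewrite negb_imply => /andP [xS /forallPn [y]].
  rewrite negb_imply negbK => /andP [yS exy] /eqP cS.
  have xy : x != y by apply/eqP => exy'; move: exy; rewrite exy' irr.
  set p := [set x; y].
  have cp : #|p| = 2 by rewrite cards2 xy.
  have pS : p \subset S.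
    by apply/subsetP => w; rewrite !inE => /orP [] /eqP ->.
  have : (0 < #|S :\: p|)%N.
    have := cardsID p S; rewrite cS.
    have : (#|S :&: p| <= 2)%N by rewrite -cp subset_leq_card // subsetIr.
    move=> h1 h2; rewrite lt0n; apply/eqP => h3; rewrite h3 addn0 in h2.
    by move: h1; rewrite h2.
  rewrite card_gt0 => /set0Pn [z]; rewrite inE => /andP [zp zS].
  apply/bigcupP; exists p.
    rewrite inE cp eqxx andbT; apply/negP => /forallP /(_ x).
    rewrite !inE eqxx /= => /forallP /(_ y); rewrite !inE eqxx orbT /=.
    by rewrite exy.
  apply/imsetP; exists z; first by rewrite inE.
  apply/eqP; rewrite eq_sym eqEcard; apply/andP; split.
    by rewrite subUset sub1set zS pS.
  by rewrite cardsU1 zp cp cS.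
apply: leq_trans (subset_leq_card sub) _.
apply: leq_trans (card_bigcup_leq _ _) _.
rewrite -sum_nat_const; apply: leq_sum => p; rewrite inE => /andP [_ /eqP cp].
apply: leq_trans (leq_imset_card _ _) _.
by rewrite cardsCs setCK cp.
Qed.

Local Open Scope ring_scope.

Definition cc : rat := 5%:R / 2%:R.
Definition LL : {poly rat} := cc *: 'X + 1.
Definition qq (n : nat) : {poly rat} := chebT n \Po LL.

Lemma chebT_SS m : chebT m.+2 = 2%:R *: 'X * chebT m.+1 - chebT m.
Proof. by []. Qed.

Definition NN (n : nat) : rat := (n%:R) ^+ 2.

Definition cprop (n : nat) : Prop :=
  [/\ (qq n)`_0 = 1, (qq n)`_1 = cc * NN n,
      (qq n)`_2 = cc ^+ 2 * (NN n * (NN n - 1) / 6%:R) &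
      (qq n)`_3 = cc ^+ 3 * (NN n * (NN n - 1) * (NN n - 4%:R) / 90%:R)].

Lemma qq_SS m : qq m.+2 = (2%:R * cc) *: ('X * qq m.+1) + 2%:R *: qq m.+1 - qq m.
Proof.
rewrite /qq chebT_SS comp_polyB comp_polyM comp_polyZ comp_polyX /LL.
rewrite -!scalerAl mulrDl mul1r -scalerAl scalerDr scalerA.
done.
Qed.

Lemma cprop_all n : cprop n /\ cprop n.+1.
Proof.
elim: n => [|n [[a0 a1 a2 a3] [b0 b1 b2 b3]]].
{ rewrite /cprop /qq /chebT /= comp_polyC comp_polyX /LL /NN !coefE /=.
  by split; split => /=; field. }
split; first by split.
rewrite /cprop qq_SS !coefB !coefD !coefZ !coefXM /= a0 a1 a2 a3 b0 b1 b2 b3 /NN.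
rewrite -!natr1.
by split; field.
Qed.

Lemma indep_count_big (T : finType) (e : rel T) k :
  (indep_number e < k)%N -> indep_count e k = 0%N.
Proof.
move=> hk; rewrite /indep_count; apply/eqP; rewrite cards_eq0; apply/eqP.
apply/setP => S; rewrite !inE; apply/negbTE; apply/negP => /andP [hS /eqP hc].
have : (#|S| <= indep_number e)%N by rewrite /indep_number; exact: (@leq_bigmax_cond _ (fun S => independent e S) (fun S => #|S|) S hS).
by rewrite hc leqNgt hk.
Qed.

Lemma coef_indep (T : finType) (e : rel T) k :
  (indep_poly e)`_k = (indep_count e k)%:R.
Proof.
rewrite /indep_poly -(poly_def _ (fun i => (indep_count e i)%:R)) coef_poly.
case: ifP => // hk; rewrite indep_count_big //.
by rewrite ltnNge -ltnS hk.
Qed.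

Lemma poly_eq_of_eval (p q : {poly rat}) : (forall z, p.[z] = q.[z]) -> p = q.
Proof.
move=> h; apply/eqP; rewrite -subr_eq0; apply/eqP.
apply: (@roots_geq_poly_eq0 _ _ [seq i%:R | i <- iota 0 (size (p - q))]).
- apply/allP => x _; by rewrite /root !hornerE h subrr.
- rewrite map_inj_uniq ?iota_uniq // => i j /eqP; rewrite eqr_nat => /eqP //.
- by rewrite size_map size_iota.
Qed.

Lemma key_coefs (T : finType) (e : rel T) n :
  indep_number e = n ->
  (forall z : rat, (5%:R / 2%:R) * (red_indep_poly e).[z] + 1
            = (chebT n).[(5%:R / 2%:R) * z + 1]) ->
  [/\ (indep_count e 1)%:R = NN n,
      (indep_count e 2)%:R = cc * (NN n * (NN n - 1) / 6%:R) &
      (indep_count e 3)%:R = cc ^+ 2 * (NN n * (NN n - 1) * (NN n - 4%:R) / 90%:R)].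
Proof.
move=> hn h.
have E : cc *: red_indep_poly e + 1 = qq n.
  apply: poly_eq_of_eval => z.
  by rewrite /qq horner_comp /LL !hornerE -h /red_indep_poly !hornerE.
have [_ q1 q2 q3] := (cprop_all n).1.
have cf k : (0 < k)%N -> (qq n)`_k = cc * (indep_count e k)%:R.
  move=> hk; rewrite -E coefD coefZ coefC /red_indep_poly coefB coef_indep coefC.
  by case: k hk => // k _; rewrite /= subr0 addr0.
have cc0 : cc != 0 by rewrite /cc.
split.
- by apply: (mulfI cc0); rewrite -cf // q1.
- by apply: (mulfI cc0); rewrite -cf // q2; ring.
- by apply: (mulfI cc0); rewrite -cf // q3; ring.
Qed.

Theorem lemma3p8 (n : nat) : (2 <= n)%N ->
  ~ exists (T : finType) (e : rel T),
      [/\ simple_graph e,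
          indep_number e = n &
          forall z : rat,
            (5%:R / 2%:R) * (red_indep_poly e).[z] + 1
            = (chebT n).[(5%:R / 2%:R) * z + 1]].
Proof.
move=> hn [T [e [[_ irr] hnum h]]].
have [k1 k2 k3] := key_coefs hnum h.
rewrite count1 // in k1.
have hm : #|T| = (n ^ 2)%N.
  by apply/eqP; rewrite -(eqr_nat rat) natrX k1.
have [k hk] : exists k, #|T| = k.+4.
  exists (n ^ 2 - 4)%N; rewrite hm.
  have : (4 <= n ^ 2)%N by rewrite -mulnn; exact: (leq_mul hn hn).
  by move=> h4; rewrite -addn4 subnK.
have s2 := split_count e 2; have s3 := split_count e 3.
have db := dep_bound irr; rewrite hk in s2 s3 db.
have b2 : ('C(k.+4, 2) * 2 = k.+4 * k.+3)%N.
  by rewrite -[2%N in LHS]/(2`!) bin_ffact !ffactnS ffactn0 !muln1.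
have b3 : ('C(k.+4, 3) * 6 = k.+4 * k.+3 * k.+2)%N.
  by rewrite -[6%N]/(3`!) bin_ffact !ffactnS ffactn0 !muln1 mulnA.
have NNe : NN n = k%:R + 4%:R.
  by rewrite -k1 hk -addn4 natrD.
move: k2 k3; rewrite NNe.
move/(congr1 (fun t : nat => t%:R : rat)): s2; rewrite natrD => s2.
move/(congr1 (fun t : nat => t%:R : rat)): s3; rewrite natrD => s3.
rewrite -[(k.+4 - 2)%N]/(k.+2) in db.
set C2n := 'C(k.+4, 2) in b2 s2. set C3n := 'C(k.+4, 3) in b3 s3.
clearbody C2n C3n.
rewrite -[k.+4]/(4 + k)%N -[k.+3]/(3 + k)%N -[k.+2]/(2 + k)%N in b2 b3 db.
move/(congr1 (fun t : nat => t%:R : rat)): b2; rewrite !natrM !natrD => b2.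
move/(congr1 (fun t : nat => t%:R : rat)): b3; rewrite !natrM !natrD => b3.
rewrite -(ler_nat rat) natrM natrD in db.
move=> k2 k3.
move: s2 s3 db k2 k3 b2 b3.
rewrite /cc.
move: (indep_count e 2)%:R (indep_count e 3)%:R (#|depset e 2|)%:R (#|depset e 3|)%:R => a2 a3 d2 d3.
move: (C2n%:R) (C3n%:R) (k%:R) (ler0n rat k) => C2 C3 x x0 s2 s3 db k2 k3 b2 b3.
have hC2 : C2 = (4 + x) * (3 + x) / 2 by rewrite -b2; field.
have hC3 : C3 = (4 + x) * (3 + x) * (2 + x) / 6 by rewrite -b3; field.
have hd2 : d2 = C2 - a2 by rewrite -s2; ring.
have hd3 : d3 = C3 - a3 by rewrite -s3; ring.
have key : d3 - d2 * (2 + x) = (4 + x) * (3 + x) * (12 + x) / 72.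
  by rewrite hd3 hd2 hC3 hC2 k2 k3; field.
have pos : 0 < (4 + x) * (3 + x) * (12 + x) / 72.
  by apply: divr_gt0 => //; apply: mulr_gt0; [apply: mulr_gt0|]; lra.
by move: pos; rewrite -key subr_gt0 ltNge db.
Qed.
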